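(* Let $\alpha,\beta,\gamma$ be independent random variables, and let $\hat\alpha,\hat\beta$ be random variables with the same distributions as $\alpha$ and $\beta$ respectively, such that $\alpha,\beta,\gamma,\hat\alpha,\hat\beta$ are mutually independent. Let $p(a|\beta,\gamma)$, $p(b|\alpha,\gamma)$, $p(c|\alpha,\beta)$ be arbitrary conditional distributions (response functions) with $a,b,c\in\{0,1\}$. Define $P_{obs}(a,b,c)=\mathbb E\,[p(a|\beta,\gamma)p(b|\alpha,\gamma)p(c|\alpha,\beta)]$, $P^{\beta}_{int}(a,b,c)=\mathbb E\,[p(a|\hat\beta,\gamma)p(b|\alpha,\gamma)p(c|\alpha,\beta)]$, $P^{\alpha}_{int}(a,b,c)=\mathbb E\,[p(a|\beta,\gamma)p(b|\hat\alpha,\gamma)p(c|\alpha,\beta)]$, $P^{\alpha\beta}_{int}(a,b,c)=\mathbb E\,[p(a|\hat\beta,\gamma)p(b|\hat\alpha,\gamma)p(c|\alpha,\beta)]$, the expectation being over $\alpha,\beta,\gamma,\hat\alpha,\hat\beta$. Set $E^1_{obs}=P_{obs}(a=b,c=1)-P_{obs}(a\neq b,c=1)$, $E^1_{\beta}=P^{\beta}_{int}(a=b,c=1)-P^{\beta}_{int}(a\neq b,c=1)$, $E^1_{\alpha}=P^{\alpha}_{int}(a=b,c=1)-P^{\alpha}_{int}(a\neq b,c=1)$, and $E_{\alpha\beta}=P^{\alpha\beta}_{int}(a=b)-P^{\alpha\beta}_{int}(a\neq b)$. Then $$S:=E_{\alpha\beta}\,P_{obs}(c=1)+2P_{obs}(c=1)-E^1_{obs}-E^1_{\alpha}-E^1_{\beta}\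 \ge\ 0.$$
   Context: This is the classical (local) triangle network with binary outputs: Alice's output $a$ depends on $(\beta,\gamma)$, Bob's $b$ on $(\alpha,\gamma)$, Charlie's $c$ on $(\alpha,\beta)$. The distributions $P^{\beta}_{int}$, $P^{\alpha}_{int}$, $P^{\alpha\beta}_{int}$ model ''latent splitting'' of the edges $\beta\to A$, $\alpha\to B$, or both: the affected party receives an independent copy of the source variable instead of the original one. Marginals such as $P(a=b,c=1)$ mean $\sum_{a=b}P(a,b,1)$. *)

(* Defs.v *)
From HB Require Import structures.
From mathcomp Require Import all_boot all_order all_algebra.
From mathcomp Require Import all_classical all_reals all_analysis.
Set Implicit Arguments. Unset Strict Implicit. Unset Printing Implicit Defensive.
Import Order.TTheory GRing.Theory Num.Theory.
Local Open Scope classical_set_scope.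
Local Open Scope ring_scope.

(* Expectation over the mutually independent variables
   alpha ~ PA, beta ~ PB, gamma ~ PG, alphahat ~ PA, betahat ~ PB,
   written as the iterated integral against the product of their laws. *)
Definition E5 (R : realType) (dA dB dG : measure_display)
  (A : measurableType dA) (B : measurableType dB) (G : measurableType dG)
  (PA : probability A R) (PB : probability B R) (PG : probability G R)
  (f : A -> B -> G -> A -> B -> R) : R :=
  Rintegral PA setT (fun al =>
  Rintegral PB setT (fun be =>
  Rintegral PG setT (fun ga =>
  Rintegral PA setT (fun ah =>
  Rintegral PB setT (fun bh => f al be ga ah bh))))).

(* A response function for a binary output depending on (x, y):
   a conditional distribution p(o | x, y), o in {0,1} (bool, true = 1),
   jointly measurable in (x, y). *)
Definition response (R : realType) (dX dY : measure_display)
  (X : measurableType dX) (Y : measurableType dY)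
  (p : bool -> X -> Y -> R) : Prop :=
  (forall o x y, 0 <= p o x y) /\
  (forall x y, p false x y + p true x y = 1) /\
  (forall o, measurable_fun [set: X * Y] (fun z : X * Y => p o z.1 z.2)).

(* Main.v *)
Require Import Defs.
From HB Require Import structures.
From mathcomp Require Import all_boot all_order all_algebra.
From mathcomp Require Import all_classical all_reals all_analysis.
From mathcomp Require Import measurable_realfun ring lra.
Import Order.TTheory GRing.Theory Num.Theory.
Import numFieldNormedType.Exports.
Local Open Scope classical_set_scope.
Local Open Scope ring_scope.

Section gen.
Context {R : realType}.

Lemma bnd_of {d} {T : measurableType d} (f : T -> R) (M : R) :
  (forall x, `|f x| <= M) -> [bounded f x | x in [set: T]].
Proof.
move=> hM; exists M; split; first by rewrite num_real.
by move=> M' hM' x _; apply: le_trans (hM x) (ltW hM').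
Qed.

Lemma int_of {d} {T : measurableType d} (P : probability T R) {f : T -> R} {M : R} :
  measurable_fun setT f -> (forall x, `|f x| <= M) ->
  P.-integrable setT (EFin \o f).
Proof.
move=> mf hM; apply: measurable_bounded_integrable => //.
  have h : ((P : measure T R) setT = 1)%E := probability_setT P.
  by rewrite h ltry.
exact: bnd_of hM.
Qed.

Lemma Rint_cst1 {d} {T : measurableType d} (P : probability T R) (k : R) :
  Rintegral P setT (fun _ => k) = k.
Proof.
rewrite Rintegral_cst //.
have h : ((P : measure T R) setT = 1)%E := probability_setT P.
by rewrite h /= mulr1.
Qed.

Lemma Rint_bound {d} {T : measurableType d} (P : probability T R) {f : T -> R} {M : R} :
  measurable_fun setT f -> (forall x, `|f x| <= M) ->
  `|Rintegral P setT f| <= M.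
Proof.
move=> mf hM.
have h1 := @le_normr_Rintegral _ _ _ P setT f measurableT (int_of P mf hM).
apply: le_trans h1 _.
rewrite -[leRHS](Rint_cst1 P M).
apply: le_Rintegral => //.
- apply: (@int_of _ _ P _ M) => //; first exact: measurableT_comp.
  by move=> x; rewrite normr_id.
- by apply: (@int_of _ _ P _ `|M|) => //.
Qed.

Lemma Rint_meas {d1 d2} {X : measurableType d1} {Y : measurableType d2}
  (P : probability Y R) {F : X * Y -> R} {M : R} :
  measurable_fun setT F -> (forall z, `|F z| <= M) ->
  measurable_fun setT (fun x => Rintegral P setT (fun y => F (x, y))).
Proof.
move=> mF hM.
have e : forall x, Rintegral P setT (fun y => F (x, y)) =
    Rintegral P setT (fun y => F (x, y) + M) - M.
  move=> x; rewrite RintegralD //.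
  - by rewrite Rint_cst1 addrK.
  - exact: (@int_of _ _ P _ M (measurable_fun_pair2 x mF)).
  - by apply: (@int_of _ _ P _ `|M|).
rewrite (_ : (fun x => _) = (fun x => Rintegral P setT (fun y => F (x, y) + M) - M)); last first.
  by apply/funext => x; exact: e.
apply: measurable_realfun.measurable_funB => //.
have h0 : forall z, (0 <= (F z + M)%:E)%E.
  move=> z; rewrite lee_fin; have := hM z; rewrite ler_norml; lra.
have mF' : measurable_fun [set: X * Y] (EFin \o (fun z => F z + M)).
  by apply/measurable_EFinP; apply: measurable_funD.
have mfub := @measurable_fun_fubini_tonelli_F _ _ X Y R P (EFin \o (fun z => F z + M)) mF' h0.
exact: (measurableT_comp (fine_measurable measurableT) mfub).
Qed.

End gen.

Section tri.
Context {R : realType} {dA dB dG : measure_display}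
  {A : measurableType dA} {B : measurableType dB} {G : measurableType dG}
  (PA : probability A R) (PB : probability B R) (PG : probability G R).

Lemma T3_ex : { T : (A -> B -> G -> R) -> R | forall f, T f =
  Rintegral PA setT (fun al => Rintegral PB setT (fun be =>
    Rintegral PG setT (fun ga => f al be ga))) }.
Proof. by exists (fun f => Rintegral PA setT (fun al => Rintegral PB setT (fun be =>
    Rintegral PG setT (fun ga => f al be ga)))). Qed.

Definition T3 := proj1_sig T3_ex.
Lemma T3E f : T3 f = Rintegral PA setT (fun al => Rintegral PB setT (fun be =>
    Rintegral PG setT (fun ga => f al be ga))).
Proof. exact: (proj2_sig T3_ex f). Qed.

Definition good (f : A -> B -> G -> R) :=
  measurable_fun [set: (A * B) * G] (fun z => f z.1.1 z.1.2 z.2) /\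
  exists M : R, forall x y z, `|f x y z| <= M.

Definition L2 (f : A -> B -> G -> R) (p : A * B) : R :=
  Rintegral PG setT (fun ga => f p.1 p.2 ga).
Definition L1 (f : A -> B -> G -> R) (al : A) : R :=
  Rintegral PB setT (fun be => L2 f (al, be)).

Lemma good_int3 {f} al be : good f -> PG.-integrable setT (EFin \o f al be).
Proof.
case=> mf [M hM]; apply: (@int_of _ _ _ PG _ M) => //.
exact: (measurable_fun_pair2 (al, be) mf).
Qed.

Lemma good_L2 {f} : good f -> measurable_fun setT (L2 f) /\
  exists M : R, forall p, `|L2 f p| <= M.
Proof.
move=> gf; have [mf [M hM]] := gf; split.
  exact: (@Rint_meas _ _ _ _ _ PG (fun z => f z.1.1 z.1.2 z.2) M).
exists M => p; apply: Rint_bound => //.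
exact: (measurable_fun_pair2 p mf).
Qed.

Lemma good_int2 {f} al : good f -> PB.-integrable setT (EFin \o (fun be => L2 f (al, be))).
Proof.
move=> /good_L2 [mf [M hM]]; apply: (@int_of _ _ _ PB _ M) => //.
exact: (measurable_fun_pair2 al mf).
Qed.

Lemma good_L1 {f} : good f -> measurable_fun setT (L1 f) /\
  exists M : R, forall al, `|L1 f al| <= M.
Proof.
move=> /good_L2 [mf [M hM]]; split.
  exact: (@Rint_meas _ _ _ _ _ PB (L2 f) M).
exists M => al; apply: Rint_bound => //.
exact: (measurable_fun_pair2 al mf).
Qed.

Lemma good_int1 {f} : good f -> PA.-integrable setT (EFin \o L1 f).
Proof.
move=> /good_L1 [mf [M hM]]; exact: (@int_of _ _ _ PA _ M).
Qed.

Lemma eq_T3 f g : (forall x y z, f x y z = g x y z) -> T3 f = T3 g.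
Proof.
move=> e; have -> // : f = g.
by apply/funext => x; apply/funext => y; apply/funext => z.
Qed.

Lemma T3D f g : good f -> good g ->
  T3 (fun x y z => f x y z + g x y z) = T3 f + T3 g.
Proof.
move=> gf gg; rewrite !T3E -RintegralD //; last 2 first.
- exact: (good_int1 gf).
- exact: (good_int1 gg).
apply: eq_Rintegral => al _; rewrite -RintegralD //; last 2 first.
- exact: (good_int2 al gf).
- exact: (good_int2 al gg).
apply: eq_Rintegral => be _; rewrite RintegralD //.
- exact: (good_int3 al be gf).
- exact: (good_int3 al be gg).
Qed.

Lemma T3Z k f : good f -> T3 (fun x y z => k * f x y z) = k * T3 f.
Proof.
move=> gf; rewrite !T3E -RintegralZl //; last exact: (good_int1 gf).
apply: eq_Rintegral => al _; rewrite -RintegralZl //; last exact: (good_int2 al gf).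
apply: eq_Rintegral => be _; rewrite RintegralZl //.
exact: (good_int3 al be gf).
Qed.

Lemma goodD {f g} : good f -> good g -> good (fun x y z => f x y z + g x y z).
Proof.
move=> [mf [M hM]] [mg [N hN]]; split; first exact: measurable_funD.
exists (M + N) => x y z; apply: le_trans (ler_normD _ _) _.
exact: lerD.
Qed.

Lemma goodM {f g} : good f -> good g -> good (fun x y z => f x y z * g x y z).
Proof.
move=> [mf [M hM]] [mg [N hN]]; split; first exact: measurable_funM.
exists (M * N) => x y z; rewrite normrM.
apply: ler_pM => //; exact: (le_trans (normr_ge0 _) (hM x y z)).
Qed.

Lemma good_cst k : good (fun _ _ _ => k).
Proof. by split; [exact: measurable_cst | exists `|k|]. Qed.

Lemma goodZ k {f} : good f -> good (fun x y z => k * f x y z).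
Proof. by move=> gf; exact: (goodM (good_cst k) gf). Qed.

Lemma goodB {f g} : good f -> good g -> good (fun x y z => f x y z - g x y z).
Proof.
move=> gf gg.
have := goodD gf (goodZ (-1) gg).
by under eq_fun => x do under eq_fun => y do under eq_fun => z do rewrite mulN1r.
Qed.

Lemma T3B f g : good f -> good g ->
  T3 (fun x y z => f x y z - g x y z) = T3 f - T3 g.
Proof.
move=> gf gg.
rewrite (@eq_T3 _ (fun x y z => f x y z + (-1) * g x y z)); last first.
  by move=> x y z; rewrite mulN1r.
by rewrite T3D ?T3Z ?mulN1r //; exact: goodZ.
Qed.

Lemma T3_ge0 f : (forall x y z, 0 <= f x y z) -> 0 <= T3 f.
Proof.
move=> h; rewrite T3E; apply: Rintegral_ge0 => al _; apply: Rintegral_ge0 => be _.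
by apply: Rintegral_ge0 => ga _.
Qed.

Lemma T3prod (c : A -> B -> R) (g : G -> R) :
  good (fun x y _ => c x y) -> good (fun _ _ z => g z) ->
  T3 (fun x y z => c x y * g z) = T3 (fun x y _ => c x y) * T3 (fun _ _ z => g z).
Proof.
move=> gc gg.
have e1 : T3 (fun _ _ z => g z) = Rintegral PG setT g by rewrite T3E !Rint_cst1.
rewrite e1 !T3E.
transitivity (Rintegral PA setT (fun al => Rintegral PB setT (fun be =>
   L2 (fun x y _ => c x y) (al, be) * Rintegral PG setT g))).
  apply: eq_Rintegral => al _; apply: eq_Rintegral => be _.
  rewrite RintegralZl //; last exact: (good_int3 al be gg).
  by rewrite /L2 /= Rint_cst1.
transitivity (Rintegral PA setT (fun al => L1 (fun x y _ => c x y) al * Rintegral PG setT g)).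
  apply: eq_Rintegral => al _; rewrite RintegralZr //.
  exact: (good_int2 al gc).
rewrite RintegralZr //; exact: (good_int1 gc).
Qed.

End tri.

Section resp.
Context {R : realType} {dA dB dG : measure_display}
  {A : measurableType dA} {B : measurableType dB} {G : measurableType dG}
  (PA : probability A R) (PB : probability B R) (PG : probability G R)
  (pA : bool -> B -> G -> R) (pB : bool -> A -> G -> R) (pC : bool -> A -> B -> R)
  (hA : response pA) (hB : response pB) (hC : response pC).

Lemma resp_bnd {d1 d2} {X : measurableType d1} {Y : measurableType d2}
  {p : bool -> X -> Y -> R} : response p ->
  forall o x y, 0 <= p o x y <= 1.
Proof.
move=> [h0 [h1 _]] o x y; have := h0 false x y; have := h0 true x y.
have := h1 x y; by case: o => /= *; apply/andP; split; lra.
Qed.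

Lemma resp_nrm {d1 d2} {X : measurableType d1} {Y : measurableType d2}
  {p : bool -> X -> Y -> R} : response p ->
  forall o x y, `|p o x y| <= 1.
Proof.
move=> hp o x y; have /andP[h1 h2] := resp_bnd hp o x y.
by rewrite ger0_norm.
Qed.

Definition Ah a ga := Rintegral PB setT (fun bh => pA a bh ga).
Definition Bh b ga := Rintegral PA setT (fun ah => pB b ah ga).

Lemma intA a ga : PB.-integrable setT (EFin \o (fun bh => pA a bh ga)).
Proof.
apply: (@int_of _ _ _ PB _ 1); last by move=> ?; exact: (resp_nrm hA).
exact: (measurable_fun_pair1 ga (hA.2.2 a)).
Qed.

Lemma intB b ga : PA.-integrable setT (EFin \o (fun ah => pB b ah ga)).
Proof.
apply: (@int_of _ _ _ PA _ 1); last by move=> ?; exact: (resp_nrm hB).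
exact: (measurable_fun_pair1 ga (hB.2.2 b)).
Qed.

Lemma Ah_sum ga : Ah false ga + Ah true ga = 1.
Proof.
rewrite /Ah -RintegralD //; [|exact: intA|exact: intA].
rewrite -[RHS](Rint_cst1 PB 1); apply: eq_Rintegral => bh _.
exact: hA.2.1.
Qed.

Lemma Bh_sum ga : Bh false ga + Bh true ga = 1.
Proof.
rewrite /Bh -RintegralD //; [|exact: intB|exact: intB].
rewrite -[RHS](Rint_cst1 PA 1); apply: eq_Rintegral => ah _.
exact: hB.2.1.
Qed.

Lemma Ah_ge0 a ga : 0 <= Ah a ga.
Proof. apply: Rintegral_ge0 => bh _; exact: hA.1. Qed.
Lemma Bh_ge0 b ga : 0 <= Bh b ga.
Proof. apply: Rintegral_ge0 => ah _; exact: hB.1. Qed.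

Lemma Ah_bnd a ga : 0 <= Ah a ga <= 1.
Proof.
have := Ah_sum ga; have := Ah_ge0 false ga; have := Ah_ge0 true ga.
by case: a => /= *; apply/andP; split; lra.
Qed.
Lemma Bh_bnd b ga : 0 <= Bh b ga <= 1.
Proof.
have := Bh_sum ga; have := Bh_ge0 false ga; have := Bh_ge0 true ga.
by case: b => /= *; apply/andP; split; lra.
Qed.

Lemma mAh a : measurable_fun setT (Ah a).
Proof.
apply: (@Rint_meas _ _ _ _ _ PB (fun w : G * B => pA a w.2 w.1) 1).
  exact: (measurableT_comp (hA.2.2 a) (measurable_fun_pair measurable_snd measurable_fst)).
by move=> z; exact: (resp_nrm hA).
Qed.

Lemma mBh b : measurable_fun setT (Bh b).
Proof.
apply: (@Rint_meas _ _ _ _ _ PA (fun w : G * A => pB b w.2 w.1) 1).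
  exact: (measurableT_comp (hB.2.2 b) (measurable_fun_pair measurable_snd measurable_fst)).
by move=> z; exact: (resp_nrm hB).
Qed.

Notation good := (@good R dA dB dG A B G).

Lemma g_pA a : good (fun _ be ga => pA a be ga).
Proof.
split; last by exists 1 => x y z; exact: (resp_nrm hA).
exact: (measurableT_comp (hA.2.2 a) (measurable_fun_pair
  (measurableT_comp measurable_snd measurable_fst) measurable_snd)).
Qed.

Lemma g_pB b : good (fun al _ ga => pB b al ga).
Proof.
split; last by exists 1 => x y z; exact: (resp_nrm hB).
exact: (measurableT_comp (hB.2.2 b) (measurable_fun_pair
  (measurableT_comp measurable_fst measurable_fst) measurable_snd)).
Qed.

Lemma g_pC c : good (fun al be _ => pC c al be).
Proof.
split; last by exists 1 => x y z; exact: (resp_nrm hC).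
exact: (measurableT_comp (hC.2.2 c) measurable_fst).
Qed.

Lemma g_Ah a : good (fun _ _ ga => Ah a ga).
Proof.
split; last first.
  exists 1 => x y z; have /andP[h1 h2] := Ah_bnd a z; by rewrite ger0_norm.
exact: (measurableT_comp (mAh a) measurable_snd).
Qed.

Lemma g_Bh b : good (fun _ _ ga => Bh b ga).
Proof.
split; last first.
  exists 1 => x y z; have /andP[h1 h2] := Bh_bnd b z; by rewrite ger0_norm.
exact: (measurableT_comp (mBh b) measurable_snd).
Qed.

Notation T3 := (T3 PA PB PG).

Lemma Eobs a b c : E5 PA PB PG (fun al be ga ah bh => pA a be ga * pB b al ga * pC c al be)
  = T3 (fun al be ga => pA a be ga * pB b al ga * pC c al be).
Proof.
rewrite /E5 T3E; apply: eq_Rintegral => al _; apply: eq_Rintegral => be _.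
by apply: eq_Rintegral => ga _; rewrite !Rint_cst1.
Qed.

Lemma Ebeta a b c : E5 PA PB PG (fun al be ga ah bh => pA a bh ga * pB b al ga * pC c al be)
  = T3 (fun al be ga => Ah a ga * pB b al ga * pC c al be).
Proof.
rewrite /E5 T3E; apply: eq_Rintegral => al _; apply: eq_Rintegral => be _.
apply: eq_Rintegral => ga _.
have -> : Rintegral PB setT (fun bh => pA a bh ga * pB b al ga * pC c al be)
    = Ah a ga * pB b al ga * pC c al be.
  transitivity (Rintegral PB setT (fun bh => pA a bh ga * (pB b al ga * pC c al be))).
    by apply: eq_Rintegral => bh _; rewrite mulrA.
  by rewrite RintegralZr ?mulrA //; exact: intA.
by rewrite Rint_cst1.
Qed.

Lemma Ealpha a b c : E5 PA PB PG (fun al be ga ah bh => pA a be ga * pB b ah ga * pC c al be)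
  = T3 (fun al be ga => pA a be ga * Bh b ga * pC c al be).
Proof.
rewrite /E5 T3E; apply: eq_Rintegral => al _; apply: eq_Rintegral => be _.
apply: eq_Rintegral => ga _.
under eq_Rintegral => ah _ do rewrite Rint_cst1.
transitivity (Rintegral PA setT (fun ah => pB b ah ga * (pA a be ga * pC c al be))).
  by apply: eq_Rintegral => ah _; rewrite mulrCA mulrA.
rewrite RintegralZr //; last exact: intB.
by rewrite /Bh mulrCA mulrA.
Qed.

Lemma Eab a b c : E5 PA PB PG (fun al be ga ah bh => pA a bh ga * pB b ah ga * pC c al be)
  = T3 (fun al be ga => Ah a ga * Bh b ga * pC c al be).
Proof.
rewrite /E5 T3E; apply: eq_Rintegral => al _; apply: eq_Rintegral => be _.
apply: eq_Rintegral => ga _.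
transitivity (Rintegral PA setT (fun ah => pB b ah ga * (Ah a ga * pC c al be))).
  apply: eq_Rintegral => ah _.
  transitivity (Rintegral PB setT (fun bh => pA a bh ga * (pB b ah ga * pC c al be))).
    by apply: eq_Rintegral => bh _; rewrite mulrA.
  rewrite RintegralZr //; last exact: intA.
  by rewrite /Ah mulrCA.
rewrite RintegralZr //; last exact: intB.
by rewrite /Bh mulrCA mulrA.
Qed.

End resp.


Lemma key (R : realFieldType) (u x v y : R) : -1 <= u <= 1 -> -1 <= x <= 1 -> -1 <= v <= 1 -> -1 <= y <= 1 ->
  0 <= 2 + 2 * x * y - (u + x) * (v + y).
Proof.
move=> /andP[u1 u2] /andP[x1 x2] /andP[v1 v2] /andP[y1 y2].
have e : 4 * (2 + 2 * x * y - (u + x) * (v + y)) = ((1+u)*(1+v)*((1-x)*(1-y)) + (1-u)*(1-v)*((1+x)*(1+y))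
  + (1+u)*(1-v)*((1+x)*(1+y)+2*(1-y)) + (1-u)*(1+v)*((1+x)*(1+y)+2*(1-x))).
  by ring.
have a1 : 0 <= 1 + u by lra. have a2 : 0 <= 1 - u by lra.
have b1 : 0 <= 1 + v by lra. have b2 : 0 <= 1 - v by lra.
have c1 : 0 <= 1 + x by lra. have c2 : 0 <= 1 - x by lra.
have d1 : 0 <= 1 + y by lra. have d2 : 0 <= 1 - y by lra.
have : 0 <= 4 * (2 + 2 * x * y - (u + x) * (v + y)).
  by rewrite e !addr_ge0 // !mulr_ge0 // ?addr_ge0 ?mulr_ge0.
lra.
Qed.

Ltac gt gA gB gC gAh gBh gc := repeat first [ apply: goodB | apply: goodD | apply: goodM | apply: gc | apply: gA | apply: gB | apply: gC | apply: gAh | apply: gBh ].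

Lemma abstr (R : realType) (dA dB dG : measure_display)
  (A : measurableType dA) (B : measurableType dB) (G : measurableType dG)
  (PA : probability A R) (PB : probability B R) (PG : probability G R)
  (pA : bool -> B -> G -> R) (pB : bool -> A -> G -> R) (pC : bool -> A -> B -> R)
  (hA : response pA) (hB : response pB) (hC : response pC)
  (Pobs Pbeta Palpha Palphabeta : bool -> bool -> bool -> R) :
  (forall a b c, Pobs a b c = T3 PA PB PG (fun al be ga => pA a be ga * pB b al ga * pC c al be)) ->
  (forall a b c, Pbeta a b c = T3 PA PB PG (fun al be ga => Ah PB pA a ga * pB b al ga * pC c al be)) ->
  (forall a b c, Palpha a b c = T3 PA PB PG (fun al be ga => pA a be ga * Bh PA pB b ga * pC c al be)) ->
  (forall a b c, Palphabeta a b c = T3 PA PB PG (fun al be ga => Ah PB pA a ga * Bh PA pB b ga * pC c al be)) ->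
  let E1 := fun P : bool -> bool -> bool -> R =>
        (P false false true + P true true true)
        - (P false true true + P true false true) in
  let E1obs := E1 Pobs in
  let E1beta := E1 Pbeta in
  let E1alpha := E1 Palpha in
  let Eab := \sum_(c : bool)
        ((Palphabeta false false c + Palphabeta true true c)
         - (Palphabeta false true c + Palphabeta true false c)) in
  let Pobs_c1 := \sum_(a : bool) \sum_(b : bool) Pobs a b true in
  0 <= Eab * Pobs_c1 + 2 * Pobs_c1 - E1obs - E1alpha - E1beta.
Proof.
move=> hobs hbeta halpha hab; cbv zeta beta.
rewrite !big_bool /=.
have gA := @g_pA R dA dB dG A B G pA hA; have gB := @g_pB R dA dB dG A B G pB hB.
have gC := @g_pC R dA dB dG A B G pC hC.
have gAh := @g_Ah R dA dB dG A B G PB pA hA; have gBh := @g_Bh R dA dB dG A B G PA pB hB.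
have gc : forall k : R, good (fun (_ : A) (_ : B) (_ : G) => k) := good_cst.
have eA : forall be ga, pA false be ga = 1 - pA true be ga.
  by move=> be ga; have := hA.2.1 be ga; lra.
have eB : forall al ga, pB false al ga = 1 - pB true al ga.
  by move=> al ga; have := hB.2.1 al ga; lra.
have eC : forall al be, pC false al be = 1 - pC true al be.
  by move=> al be; have := hC.2.1 al be; lra.
have eAh : forall ga, Ah PB pA false ga = 1 - Ah PB pA true ga.
  by move=> ga; have := Ah_sum PB _ hA ga; lra.
have eBh : forall ga, Bh PA pB false ga = 1 - Bh PA pB true ga.
  by move=> ga; have := Bh_sum PA _ hB ga; lra.
have T3D := @T3D R dA dB dG A B G PA PB PG.
have T3B := @T3B R dA dB dG A B G PA PB PG.
have T3Z := @T3Z R dA dB dG A B G PA PB PG.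
have T3prod := @T3prod R dA dB dG A B G PA PB PG.
have eq_T3 := @eq_T3 R dA dB dG A B G PA PB PG.
have T3_ge0 := @T3_ge0 R dA dB dG A B G PA PB PG.
have hC1 : Pobs true true true + Pobs true false true + (Pobs false true true + Pobs false false true)
    = T3 PA PB PG (fun al be _ => pC true al be).
  rewrite !hobs -!T3D; try by gt gA gB gC gAh gBh gc.
  by apply: eq_T3 => al be ga; rewrite !eA !eB; ring.
have hEab : Palphabeta false false true + Palphabeta true true true - (Palphabeta false true true + Palphabeta true false true) +
  (Palphabeta false false false + Palphabeta true true false - (Palphabeta false true false + Palphabeta true false false))
   = T3 PA PB PG (fun _ _ ga => (Ah PB pA false ga - Ah PB pA true ga) * (Bh PA pB false ga - Bh PA pB true ga)).
  rewrite !hab -!T3D; try by gt gA gB gC gAh gBh gc.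
  rewrite -!T3B; try by gt gA gB gC gAh gBh gc.
  rewrite -T3D; try by gt gA gB gC gAh gBh gc.
  by apply: eq_T3 => al be ga; rewrite !eC; ring.
have hE1obs : Pobs false false true + Pobs true true true - (Pobs false true true + Pobs true false true)
   = T3 PA PB PG (fun al be ga => pC true al be * ((pA false be ga - pA true be ga) * (pB false al ga - pB true al ga))).
  rewrite !hobs -!T3D; try by gt gA gB gC gAh gBh gc.
  rewrite -T3B; try by gt gA gB gC gAh gBh gc.
  by apply: eq_T3 => al be ga; ring.
have hE1beta : Pbeta false false true + Pbeta true true true - (Pbeta false true true + Pbeta true false true)
   = T3 PA PB PG (fun al be ga => pC true al be * ((Ah PB pA false ga - Ah PB pA true ga) * (pB false al ga - pB true al ga))).
  rewrite !hbeta -!T3D; try by gt gA gB gC gAh gBh gc.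
  rewrite -T3B; try by gt gA gB gC gAh gBh gc.
  by apply: eq_T3 => al be ga; ring.
have hE1alpha : Palpha false false true + Palpha true true true - (Palpha false true true + Palpha true false true)
   = T3 PA PB PG (fun al be ga => pC true al be * ((pA false be ga - pA true be ga) * (Bh PA pB false ga - Bh PA pB true ga))).
  rewrite !halpha -!T3D; try by gt gA gB gC gAh gBh gc.
  rewrite -T3B; try by gt gA gB gC gAh gBh gc.
  by apply: eq_T3 => al be ga; ring.
rewrite hEab hC1 hE1obs hE1alpha hE1beta.
rewrite [T3 _ _ _ _ * T3 _ _ _ _]mulrC.
rewrite -T3prod; try by gt gA gB gC gAh gBh gc.
rewrite -T3Z; try by gt gA gB gC gAh gBh gc.
rewrite -T3D; try by gt gA gB gC gAh gBh gc.
rewrite -!T3B; try by gt gA gB gC gAh gBh gc.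
apply: T3_ge0 => al be ga.
have c0 := hC.1 true al be.
have bA := fun o => resp_bnd hA o be ga.
have bB := fun o => resp_bnd hB o al ga.
have bAh := fun o => Ah_bnd PB _ hA o ga.
have bBh := fun o => Bh_bnd PA _ hB o ga.
have k : 0 <= 2 + 2 * (Ah PB pA false ga - Ah PB pA true ga) * (Bh PA pB false ga - Bh PA pB true ga)
   - ((pA false be ga - pA true be ga) + (Ah PB pA false ga - Ah PB pA true ga))
   * ((pB false al ga - pB true al ga) + (Bh PA pB false ga - Bh PA pB true ga)).
  apply: key.
  - by have /andP[? ?] := bA false; have /andP[? ?] := bA true; apply/andP; split; lra.
  - by have /andP[? ?] := bAh false; have /andP[? ?] := bAh true; apply/andP; split; lra.
  - by have /andP[? ?] := bB false; have /andP[? ?] := bB true; apply/andP; split; lra.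
  - by have /andP[? ?] := bBh false; have /andP[? ?] := bBh true; apply/andP; split; lra.
have := mulr_ge0 c0 k.
set u := pA false be ga - pA true be ga.
set x := Ah PB pA false ga - Ah PB pA true ga.
set v := pB false al ga - pB true al ga.
set y := Bh PA pB false ga - Bh PA pB true ga.
set C := pC true al be.
move=> h; apply: le_trans h _; rewrite le_eqVlt; apply/orP; left; apply/eqP; ring.
Qed.

Theorem mainTheorem2 (R : realType) (dA dB dG : measure_display)
  (A : measurableType dA) (B : measurableType dB) (G : measurableType dG)
  (PA : probability A R) (PB : probability B R) (PG : probability G R)
  (pA : bool -> B -> G -> R) (pB : bool -> A -> G -> R) (pC : bool -> A -> B -> R)
  (hA : response pA) (hB : response pB) (hC : response pC) :
  let Pobs := fun a b c => E5 PA PB PG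
        (fun al be ga ah bh => pA a be ga * pB b al ga * pC c al be) in
  let Pbeta := fun a b c => E5 PA PB PG
        (fun al be ga ah bh => pA a bh ga * pB b al ga * pC c al be) in
  let Palpha := fun a b c => E5 PA PB PG
        (fun al be ga ah bh => pA a be ga * pB b ah ga * pC c al be) in
  let Palphabeta := fun a b c => E5 PA PB PG
        (fun al be ga ah bh => pA a bh ga * pB b ah ga * pC c al be) in
  (* E^1 := P(a = b, c = 1) - P(a <> b, c = 1) *)
  let E1 := fun P : bool -> bool -> bool -> R =>
        (P false false true + P true true true)
        - (P false true true + P true false true) in
  let E1obs := E1 Pobs in
  let E1beta := E1 Pbeta in
  let E1alpha := E1 Palpha in
  (* E_{alpha beta} := P(a = b) - P(a <> b), marginalizing over c *)
  let Eab := \sum_(c : bool)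
        ((Palphabeta false false c + Palphabeta true true c)
         - (Palphabeta false true c + Palphabeta true false c)) in
  let Pobs_c1 := \sum_(a : bool) \sum_(b : bool) Pobs a b true in
  0 <= Eab * Pobs_c1 + 2 * Pobs_c1 - E1obs - E1alpha - E1beta.
Proof.
have H := @abstr R dA dB dG A B G PA PB PG pA pB pC hA hB hC
  (fun a b c => E5 PA PB PG (fun al be ga ah bh => pA a be ga * pB b al ga * pC c al be))
  (fun a b c => E5 PA PB PG (fun al be ga ah bh => pA a bh ga * pB b al ga * pC c al be))
  (fun a b c => E5 PA PB PG (fun al be ga ah bh => pA a be ga * pB b ah ga * pC c al be))
  (fun a b c => E5 PA PB PG (fun al be ga ah bh => pA a bh ga * pB b ah ga * pC c al be)).
have H1 := H (fun a b c => Eobs PA PB PG pA pB pC a b c).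
have H2 := H1 (fun a b c => Ebeta PA PB PG pA pB pC hA a b c).
have H3 := H2 (fun a b c => Ealpha PA PB PG pA pB pC hB a b c).
have H4 := H3 (fun a b c => Eab PA PB PG pA pB pC hA hB a b c).
exact: H4.
Qed.
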